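(* Let $D$ be a strong nonseparable digraph, let $H$ be a strong nonseparable subdigraph of $D$, and let $P=(x_0,x_1,\ldots,x_{r-1},x_r)$ be an ear of $H$ in $D$ with length $l(P)=r\geq 2$. Suppose $H'=H\cup P$ has a kernel $N'$ and one of the following holds: (1) $x_0,x_r\in N'$; (2) $x_0\in N'$ and $x_r\notin N'$; (3) $x_0\notin N'$, $x_r\in N'$ and $l(P)$ is even; (4) $x_0,x_r\notin N'$ and $l(P)$ is odd. Then $H$ has a kernel.
   Context: All digraphs are finite, without loops or multiple arcs. Paths and cycles are directed; the length of a path is its number of arcs. A digraph is strong if for every ordered pair of vertices $x,y$ there is a directed path from $x$ to $y$; it is nonseparable if its underlying undirected graph is nonseparable (has no cut vertex). For a subdigraph $H$ of $D$, an ear of $H$ in $D$ is a directed path $(x_0,\ldots,x_r)$ in $D$ whose end vertices $x_0,x_r$ lie in $H$ and whose internal vertices $x_1,\ldots,x_{r-1}$ do not lie in $H$ (or a directed cycle with exactly one vertex $x_0=x_r$ in $H$). A kernel of a digraph is a set $N$ of vertices that is independent (no arc between two of its vertices) and absorbent (every vertex not in $N$ has an out-neighbour in $N$). *)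

(* Defs.v *)
From mathcomp Require Import all_boot.
Set Implicit Arguments. Unset Strict Implicit. Unset Printing Implicit Defensive.

(* A digraph is given by a vertex set W : {set V} and an arc set A : {set V * V}
   over an ambient finite type V. *)
Section Digraphs.
Variable V : finType.

(* well-formed digraph: arcs join vertices of W, no loops
   (multiple arcs are impossible since A is a set of pairs) *)
Definition wf_digraph (W : {set V}) (A : {set (V * V)}) : Prop :=
  forall a, a \in A -> [/\ a.1 \in W, a.2 \in W & a.1 != a.2].

Definition subdigraph (W2 : {set V}) (A2 : {set (V * V)})
  (W1 : {set V}) (A1 : {set (V * V)}) : Prop :=
  wf_digraph W2 A2 /\ W2 \subset W1 /\ A2 \subset A1.

(* directed walk x -> ... -> y using arcs of A (exists a directed path iff exists a walk) *)
Definition dpath_exists (A : {set (V * V)}) (x y : V) : Prop :=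
  exists s : seq V, path (fun u v => (u, v) \in A) x s && (last x s == y).

Definition strong (W : {set V}) (A : {set (V * V)}) : Prop :=
  forall x y, x \in W -> y \in W -> dpath_exists A x y.

Definition und_connected (W : {set V}) (A : {set (V * V)}) : Prop :=
  forall x y, x \in W -> y \in W ->
    exists s : seq V,
      path (fun u v => [&& u \in W, v \in W & ((u, v) \in A) || ((v, u) \in A)]) x s
      && (last x s == y).

Definition nonseparable (W : {set V}) (A : {set (V * V)}) : Prop :=
  und_connected W A /\ forall v, v \in W -> und_connected (W :\ v) A.

Definition is_kernel (W : {set V}) (A : {set (V * V)}) (N : {set V}) : Prop :=
  [/\ N \subset W,
      (forall u v, u \in N -> v \in N -> (u, v) \notin A) &
      (forall u, u \in W -> u \notin N -> exists2 v, v \in N & (u, v) \in A)].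

Definition has_kernel (W : {set V}) (A : {set (V * V)}) : Prop :=
  exists N, is_kernel W A N.

Definition seq_arcs (p : seq V) : seq (V * V) := zip p (behead p).

(* the sequence x0 :: q = [x_0; ...; x_r] is an ear of (WH, AH) in the digraph
   with arc set AD: a directed path (all x_i distinct) or a directed cycle
   (x_0 = x_r and x_1..x_r distinct) with x_0, x_r in WH, internal vertices
   x_1..x_{r-1} not in WH, and all arcs (x_i, x_{i+1}) in AD. *)
Definition is_ear (AD : {set (V * V)}) (WH : {set V}) (x0 : V) (q : seq V) : Prop :=
  [/\ x0 \in WH, last x0 q \in WH,
      (forall i, 0 < i < size q -> nth x0 (x0 :: q) i \notin WH),
      (forall a, a \in seq_arcs (x0 :: q) -> a \in AD) &
      (uniq (x0 :: q) \/ (last x0 q = x0 /\ uniq q))].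

End Digraphs.

(* Main.v *)
Require Import Defs.
From mathcomp Require Import all_boot.
From mathcomp Require Import zify.
Set Implicit Arguments. Unset Strict Implicit. Unset Printing Implicit Defensive.

Section Aux.
Variable V : finType.

Lemma arcs_memP (x0 : V) (q : seq V) a :
  a \in seq_arcs (x0 :: q) ->
  exists2 j, j < size q & a = (nth x0 (x0 :: q) j, nth x0 q j).
Proof.
rewrite /seq_arcs /= => /(nthP (x0, x0)) [j Hj <-].
have Hs : size (zip (x0 :: q) q) = size q.
  by rewrite size_zip /=; apply/minn_idPr.
exists j; first by rewrite -Hs.
by rewrite nth_zip_cond Hj.
Qed.

Lemma arcs_mem (x0 : V) (q : seq V) j :
  j < size q -> (nth x0 (x0 :: q) j, nth x0 q j) \in seq_arcs (x0 :: q).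
Proof.
move=> Hj.
have Hs : size (zip (x0 :: q) q) = size q.
  by rewrite size_zip /=; apply/minn_idPr.
rewrite /seq_arcs /=.
have -> : (nth x0 (x0 :: q) j, nth x0 q j) = nth (x0, x0) (zip (x0 :: q) q) j.
  by rewrite nth_zip_cond Hs Hj.
by apply: mem_nth; rewrite Hs.
Qed.

Lemma ear_inj (x0 : V) (q : seq V) i j :
  (uniq (x0 :: q) \/ (last x0 q = x0 /\ uniq q)) ->
  0 < i < size q -> j < size q ->
  nth x0 (x0 :: q) j = nth x0 (x0 :: q) i -> j = i.
Proof.
move=> Hu /andP[Hi0 Hi] Hj E.
case: Hu => [Hu | [Hl Hu]].
  by apply/eqP; rewrite -(nth_uniq x0 _ _ Hu) ?E //=; lia.
case: i Hi0 Hi E => // i _ Hi /= E.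
case: j Hj E => [|j] Hj /= E.
  have : nth x0 q (size q).-1 = nth x0 q i by rewrite nth_last Hl.
  have h1 : (size q).-1 < size q by lia.
  have h2 : i < size q by lia.
  by move/eqP; rewrite (nth_uniq x0 h1 h2 Hu); move/eqP => ?; lia.
have h1 : j < size q by lia.
have h2 : i < size q by lia.
by move/eqP: E; rewrite (nth_uniq x0 h1 h2 Hu) => /eqP ->.
Qed.

End Aux.

(* The ear is P = x0 :: q = (x_0, ..., x_r), with r = size q and x_r = last x0 q. *)
Theorem mainTheorem4 (V : finType) (WD : {set V}) (AD : {set (V * V)})
  (WH : {set V}) (AH : {set (V * V)}) (x0 : V) (q : seq V) (N' : {set V}) :
  wf_digraph WD AD -> strong WD AD -> nonseparable WD AD ->
  subdigraph WH AH WD AD -> strong WH AH -> nonseparable WH AH ->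
  is_ear AD WH x0 q ->
  2 <= size q ->
  is_kernel (WH :|: [set x in x0 :: q]) (AH :|: [set a in seq_arcs (x0 :: q)]) N' ->
  [\/ (x0 \in N' /\ last x0 q \in N'),
      (x0 \in N' /\ last x0 q \notin N'),
      [/\ x0 \notin N', last x0 q \in N' & ~~ odd (size q)] |
      [/\ x0 \notin N', last x0 q \notin N' & odd (size q)]] ->
  has_kernel WH AH.
Proof.
move=> _ _ _ [wfH _] _ _ [Hx0 Hxr Hint _ Huq] Hr [Nsub Nind Nabs] Hcase.
set y := fun i => nth x0 (x0 :: q) i.
have yS : forall i, y i.+1 = nth x0 q i by [].
have Hyr : y (size q) = last x0 q.
  by rewrite /y -nth_last /=; case: (size q) Hr.
have Halt : forall i, 0 < i < size q -> (y i \in N') = ~~ (y i.+1 \in N').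
  move=> i Hi.
  have Harc : (y i, y i.+1) \in AH :|: [set a in seq_arcs (x0 :: q)].
    by rewrite inE; apply/orP; right; rewrite inE; apply: arcs_mem; lia.
  case Hin : (y i \in N').
    case Hin2 : (y i.+1 \in N') => //.
    by move: (Nind _ _ Hin Hin2); rewrite Harc.
  have Hyi : y i \in WH :|: [set x in x0 :: q].
    by rewrite inE; apply/orP; right; rewrite inE /y mem_nth //=; lia.
  have [v Hv Hav] := Nabs _ Hyi (negbT Hin).
  move: Hav; rewrite inE => /orP[Hav | ].
    by have [H1 _ _] := wfH _ Hav; move: (Hint i Hi); rewrite /= H1.
  rewrite inE => /arcs_memP [j Hj [E1 E2]].
  have ji : j = i by apply: (ear_inj Huq Hi Hj); rewrite -E1.
  by subst j; change (y i.+1) with (nth x0 q i); rewrite -E2 Hv.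
have Hk : forall k, k < size q ->
    (y (size q - k) \in N') = (last x0 q \in N') (+) odd k.
  elim=> [|k IH] Hk; first by rewrite subn0 Hyr addbF.
  have E : (size q - k.+1).+1 = size q - k by lia.
  rewrite Halt; last by lia.
  by rewrite E IH /= ?addbN //; lia.
have Hy1 : (y 1 \in N') = (last x0 q \in N') (+) odd (size q).-1.
  by rewrite -Hk; try lia; congr (y _ \in N'); lia.
exists (N' :&: WH); split.
- exact: subsetIr.
- move=> u v; rewrite !inE => /andP[Hu _] /andP[Hv _].
  by apply: contraT; rewrite negbK => Huv; move: (Nind _ _ Hu Hv); rewrite inE Huv.
- move=> u Hu; rewrite inE Hu andbT => HuN.
  have Hu' : u \in WH :|: [set x in x0 :: q] by rewrite inE Hu.
  have [v Hv Hav] := Nabs _ Hu' HuN.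
  move: Hav; rewrite inE => /orP[Hav | ].
    by have [_ H2 _] := wfH _ Hav; exists v => //; rewrite inE Hv H2.
  rewrite inE => /arcs_memP [j Hj [E1 E2]].
  case: j Hj E1 E2 => [|j] Hj E1 E2.
    have Ho : odd (size q) = ~~ odd (size q).-1.
      by case E: (size q) => [|m]; [lia | by []].
    have Hx1 : x0 \notin N' -> (y 1 \in N') = false.
      move=> Hn; rewrite Hy1; case: Hcase => [[H _]|[H _]|[_ H1 H2]|[_ H1 H2]].
      + by rewrite H in Hn.
      + by rewrite H in Hn.
      + by rewrite H1; move: H2; rewrite Ho negbK => ->.
      + by rewrite (negbTE H1); move: H2; rewrite Ho => /negbTE ->.
    have Eu : u = x0 by rewrite E1.
    have Ev : v = y 1 by rewrite E2.
    by move: Hv; rewrite Ev Hx1 // -Eu.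
  have H : 0 < j.+1 < size q by lia.
  by move: (Hint _ H); rewrite -E1 Hu.
Qed.
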